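(* Let $\omega$ be a lower semicontinuous weight on $\mathcal{A}$ such that $\omega\circ\alpha_t=\omega$ for all $t\in\mathbb{R}$, $\omega(E_n^2)<\infty$ for all $n\in\mathbb{N}$, and $\omega(x)=\lim_{n\to\infty}\omega(E_nxE_n)$ for all $x\in\mathcal{A}_+$. Then $\omega$ is a $\beta$-KMS weight for $\alpha$ if and only if $$\omega(E_na^*E_m^2aE_n)=\omega\big(E_m\alpha_{-i\beta/2}(a)E_n^2\alpha_{-i\beta/2}(a)^*E_m\big)$$ for all $a\in D(\alpha_{-i\beta/2})$ and all $n,m\in\mathbb{N}$.
   Context: Standing setup: $\mathcal{A}$ is a separable $C^{*}$-algebra, $\alpha=\{\alpha_t\}_{t\in\mathbb{R}}$ a continuous one-parameter group of automorphisms, $\beta\in\mathbb{R}$, and $\{E_n\}_{n\in\mathbb{N}}$ is an approximate identity for $\mathcal{A}$ with $\alpha_t(E_n)=E_n$ for all $t,n$ and $E_nE_m=E_n$ whenever $m>n$. For $z\in\mathbb{C}$, $D(\alpha_z)$ is the set of $a$ for which there is a continuous $f$ on the closed strip between $\operatorname{Im}=0$ and $\operatorname{Im}=\operatorname{Im}z$, analytic in its interior, with $f(t)=\alpha_t(a)$, $t\in\mathbb{R}$; $\alpha_z(a)=f(z)$. A weight is an additive, positively homogeneous map $\mathcal{A}_+\to[0,\infty]$; proper means densely defined and lower semicontinuous. A $\beta$-KMS weight is a proper weight $\psi$ with $\psi\circ\alpha_t=\psi$ and $\psi(a^*a)=\psi(\alpha_{-i\beta/2}(a)\alpha_{-i\beta/2}(a)^*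 )$ for all $a\in D(\alpha_{-i\beta/2})$ (zero weight allowed). *)

(* Defs.v *)
From HB Require Import structures.
From mathcomp Require Import all_boot all_order all_algebra.
From mathcomp Require Import all_classical all_reals all_analysis.
From mathcomp.real_closed Require Import complex.
Import Order.TTheory GRing.Theory Num.Theory.
Import numFieldNormedType.Exports.

Set Implicit Arguments.
Unset Strict Implicit.
Unset Printing Implicit Defensive.

Local Open Scope ring_scope.
Local Open Scope classical_set_scope.

Definition Cstar_algebra (R : realType) (A : completeNormedModType R[i])
    (mul : A -> A -> A) (star : A -> A) : Prop :=
  [/\ (forall x y z, mul x (mul y z) = mul (mul x y) z),
      (forall x y z, mul x (y + z) = mul x y + mul x z),
      (forall x y z, mul (x + y) z = mul x z + mul y z),
      (forall (c : R[i]) x y, mul (c *: x) y = c *: mul x y /\ mul x (c *: y) = c *: mul x y) &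
      (forall x, `|mul (star x) x| = `|x| ^+ 2)] /\
  [/\ (forall x y, star (x + y) = star x + star y),
      (forall (c : R[i]) x, star (c *: x) = (c^*)%C *: star x),
      (forall x, star (star x) = x),
      (forall x y, star (mul x y) = mul (star y) (star x)) &
      (forall x y, `|mul x y| <= `|x| * `|y|)].

Definition separable (T : topologicalType) : Prop :=
  exists D : set T, countable D /\ closure D = setT.

Definition pos_cone (A : Type) (mul : A -> A -> A) (star : A -> A) : set A :=
  [set x | exists a, x = mul (star a) a].

Definition star_automorphism (R : realType) (A : completeNormedModType R[i])
    (mul : A -> A -> A) (star : A -> A) (f : A -> A) : Prop :=
  [/\ bijective f,
      (forall x y, f (x + y) = f x + f y),
      (forall (c : R[i]) x, f (c *: x) = c *: f x),
      (forall x y, f (mul x y) = mul (f x) (f y)) &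
      (forall x, f (star x) = star (f x))].

Definition one_param_group (R : realType) (A : completeNormedModType R[i])
    (mul : A -> A -> A) (star : A -> A) (alpha : R -> A -> A) : Prop :=
  [/\ (forall t, star_automorphism mul star (alpha t)),
      (forall x, alpha 0 x = x),
      (forall s t x, alpha (s + t) x = alpha s (alpha t x)) &
      (forall x, continuous (fun t : R => alpha t x))].

Definition approx_identity (R : realType) (A : completeNormedModType R[i])
    (mul : A -> A -> A) (star : A -> A) (E : nat -> A) : Prop :=
  [/\ (forall n, pos_cone mul star (E n)),
      (forall n, `|E n| <= 1) &
      (forall a, (fun n => mul (E n) a) @ \oo --> a /\
                 (fun n => mul a (E n)) @ \oo --> a)].

Definition strip (R : realType) (z : R[i]) : set R[i]^o :=
  [set w | Num.min 0 (complex.Im z) <= complex.Im w <= Num.max 0 (complex.Im z)].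
Definition open_strip (R : realType) (z : R[i]) : set R[i]^o :=
  [set w | Num.min 0 (complex.Im z) < complex.Im w < Num.max 0 (complex.Im z)].

Definition complex_differentiable (R : realType) (A : completeNormedModType R[i])
    (f : R[i]^o -> A) (w : R[i]) : Prop :=
  exists L : A,
    (fun h : R[i] => h^-1 *: (f (w + h) - f w)) @ (0 : R[i]^o)^' --> L.

(* [alpha_ext alpha z a b] : a \in D(alpha_z) and alpha_z(a) = b, i.e. there *)
(* is f continuous on the closed strip, analytic in its interior, with      *)
(* f(t) = alpha_t(a) for real t and f(z) = b.                               *)
Definition alpha_ext (R : realType) (A : completeNormedModType R[i])
    (alpha : R -> A -> A) (z : R[i]) (a b : A) : Prop :=
  exists f : R[i]^o -> A,
    [/\ {within strip z, continuous f},
        (forall w, open_strip z w -> complex_differentiable f w),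
        (forall t : R, f (t%:C)%C = alpha t a) &
        f z = b].

Definition weight (R : realType) (A : completeNormedModType R[i])
    (mul : A -> A -> A) (star : A -> A) (psi : A -> \bar R) : Prop :=
  [/\ (forall x, pos_cone mul star x -> (0 <= psi x)%E),
      (forall x y, pos_cone mul star x -> pos_cone mul star y ->
                   psi (x + y) = (psi x + psi y)%E) &
      (forall (t : R) x, 0 <= t -> pos_cone mul star x ->
                   psi ((t%:C)%C *: x) = (t%:E * psi x)%E)].

Definition weight_lsc (R : realType) (A : completeNormedModType R[i])
    (mul : A -> A -> A) (star : A -> A) (psi : A -> \bar R) : Prop :=
  forall r : R, closed [set x | pos_cone mul star x /\ (psi x <= r%:E)%E].

Definition densely_defined (R : realType) (A : completeNormedModType R[i])
    (mul : A -> A -> A) (star : A -> A) (psi : A -> \bar R) : Prop :=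
  pos_cone mul star `<=`
    closure [set x | pos_cone mul star x /\ (psi x < +oo)%E].

Definition proper_weight (R : realType) (A : completeNormedModType R[i])
    (mul : A -> A -> A) (star : A -> A) (psi : A -> \bar R) : Prop :=
  [/\ weight mul star psi, densely_defined mul star psi & weight_lsc mul star psi].

Definition KMS_weight (R : realType) (A : completeNormedModType R[i])
    (mul : A -> A -> A) (star : A -> A) (alpha : R -> A -> A) (beta : R)
    (psi : A -> \bar R) : Prop :=
  [/\ proper_weight mul star psi,
      (forall t x, pos_cone mul star x -> psi (alpha t x) = psi x) &
      (forall a b, alpha_ext alpha (- (beta / 2) *i)%C a b ->
         psi (mul (star a) a) = psi (mul b (star b)))].

(* Main.v *)
Require Import Defs.
From HB Require Import structures.
From mathcomp Require Import all_boot all_order all_algebra.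
From mathcomp Require Import all_classical all_reals all_analysis.
From mathcomp.real_closed Require Import complex.
From mathcomp Require Import ring lra.
Import Order.TTheory GRing.Theory Num.Theory.
Import numFieldNormedType.Exports.
Local Open Scope ring_scope.
Local Open Scope classical_set_scope.
Set Implicit Arguments.
Unset Strict Implicit.
Lemma realC_of (R : realType) (e : R[i]) : complex.Im e = 0 -> e = ((complex.Re e)%:C)%C.
Proof. by case: e => a b /= ->. Qed.

Section CS.
Variables (R : realType) (A : completeNormedModType R[i])
  (mul : A -> A -> A) (star : A -> A).
Hypothesis HC : Cstar_algebra mul star.

Definition nrm (x : A) : R := complex.Re `|x|.

Lemma normE x : `|x| = (nrm x)%:C%C.
Proof.
have := normr_ge0 x; rewrite lecE => /andP [/eqP h _].
rewrite /nrm; move: h; case: `|x| => a b /= ->; by [].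
Qed.

Lemma nrm_ge0 x : 0 <= nrm x.
Proof. by have := normr_ge0 x; rewrite normE lecR. Qed.

Lemma nrmD x y : nrm (x + y) <= nrm x + nrm y.
Proof. by have := ler_normD x y; rewrite !normE -rmorphD lecR. Qed.

Lemma nrmN x : nrm (- x) = nrm x.
Proof. by rewrite /nrm normrN. Qed.

Lemma nrm0 : nrm 0 = 0.
Proof. by rewrite /nrm normr0. Qed.

Lemma nrmZ (r : R) x : 0 <= r -> nrm ((r%:C)%C *: x) = r * nrm x.
Proof.
move=> r0; rewrite /nrm normrZ normE.
have -> : `|(r%:C)%C| = (r%:C)%C by rewrite ger0_norm // ler0c.
by rewrite -rmorphM.
Qed.

Lemma nrmB x y : nrm (x - y) = nrm (y - x).
Proof. by rewrite -nrmN opprB. Qed.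

Lemma mA x y z : mul x (mul y z) = mul (mul x y) z.
Proof. by case: HC => -[]. Qed.
Lemma mDr x y z : mul x (y + z) = mul x y + mul x z.
Proof. by case: HC => -[]. Qed.
Lemma mDl x y z : mul (x + y) z = mul x z + mul y z.
Proof. by case: HC => -[]. Qed.
Lemma mZl c x y : mul (c *: x) y = c *: mul x y.
Proof. by case: HC => -[] _ _ _ h _ _; case: (h c x y). Qed.
Lemma mZr c x y : mul x (c *: y) = c *: mul x y.
Proof. by case: HC => -[] _ _ _ h _ _; case: (h c x y). Qed.
Lemma Cstar_id x : `|mul (star x) x| = `|x| ^+ 2.
Proof. by case: HC => -[]. Qed.
Lemma starD x y : star (x + y) = star x + star y.
Proof. by case: HC => _ []. Qed.
Lemma starZ c x : star (c *: x) = (c^*)%C *: star x.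
Proof. by case: HC => _ []. Qed.
Lemma starK x : star (star x) = x.
Proof. by case: HC => _ []. Qed.
Lemma starM x y : star (mul x y) = mul (star y) (star x).
Proof. by case: HC => _ []. Qed.
Lemma nrm_mul x y : nrm (mul x y) <= nrm x * nrm y.
Proof. by case: HC => _ [] _ _ _ _ /(_ x y); rewrite !normE -rmorphM lecR. Qed.

Lemma m0r y : mul 0 y = 0.
Proof. by have := mZl 0 0 y; rewrite !scale0r. Qed.
Lemma mr0 y : mul y 0 = 0.
Proof. by have := mZr 0 y 0; rewrite !scale0r. Qed.
Lemma mNr x y : mul (- x) y = - mul x y.
Proof. by rewrite -scaleN1r mZl scaleN1r. Qed.
Lemma mrN x y : mul x (- y) = - mul x y.
Proof. by rewrite -scaleN1r mZr scaleN1r. Qed.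
Lemma mBr x y z : mul x (y - z) = mul x y - mul x z.
Proof. by rewrite mDr mrN. Qed.
Lemma mBl x y z : mul (x - y) z = mul x z - mul y z.
Proof. by rewrite mDl mNr. Qed.
Lemma star0 : star 0 = 0.
Proof. by have := starZ 0 0; rewrite !scale0r conjc0 scale0r. Qed.
Lemma starN x : star (- x) = - star x.
Proof.
rewrite -scaleN1r starZ.
have -> : ((-1 : R[i])^*)%C = -1 by apply/eqP; rewrite eq_complex /= !oppr0 !eqxx.
by rewrite scaleN1r.
Qed.
Lemma starB x y : star (x - y) = star x - star y.
Proof. by rewrite starD starN. Qed.
Lemma starR (r : R) x : star ((r%:C)%C *: x) = (r%:C)%C *: star x.
Proof. by rewrite starZ conjc_real. Qed.

Lemma nrm_star x : nrm (star x) = nrm x.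
Proof.
have key : forall y, nrm y <= nrm (star y).
  move=> y; have := Cstar_id y; rewrite !normE -rmorphXn => /complexI h.
  have := nrm_mul (star y) y; rewrite h => h2.
  have := nrm_ge0 y; have := nrm_ge0 (star y); nra.
by apply/le_anti; rewrite key andbT; have := key (star x); rewrite starK.
Qed.

Lemma cvgAP {T : Type} {F : set_system T} {FF : Filter F} (f : T -> A) (l : A) :
  f @ F --> l <-> (fun t => nrm (l - f t)) @ F --> (0 : R).
Proof.
split => [/cvgrPdist_lt H | H]; apply/cvgrPdist_lt.
- move=> e e0; have := H ((e%:C)%C); rewrite ltcR => /(_ e0).
  apply: filterS => t; rewrite normE ltcR sub0r normrN ger0_norm //; exact: nrm_ge0.
- move=> e; rewrite ltcE /= => /andP [/eqP Ie Re0].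
  move/cvgrPdist_lt: H => /(_ _ Re0); apply: filterS => t.
  rewrite sub0r normrN ger0_norm ?nrm_ge0 // => h.
  have ee : e = ((complex.Re e)%:C)%C by case: e Ie {Re0 h} => a b /= ->.
  by rewrite ee normE ltcR.
Qed.

Lemma cvgA_dom {T : Type} {F : set_system T} {FF : Filter F} (f : T -> A) (l : A)
   (h : T -> R) : h @ F --> (0 : R) ->
   (\forall t \near F, nrm (l - f t) <= h t) -> f @ F --> l.
Proof.
move=> h0 H; apply/cvgAP; apply: (squeeze_cvgr _ (cvg_cst 0) h0).
by apply: filterS H => t ->; rewrite nrm_ge0.
Qed.

Lemma uniqA {T : Type} {F : set_system T} {FF : ProperFilter F} (f : T -> A) (l1 l2 : A) :
  f @ F --> l1 -> f @ F --> l2 -> l1 = l2.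
Proof. by move=> h1 h2; apply: (cvg_unique (@norm_hausdorff _ A)) h1 h2. Qed.

Definition half : R[i] := ((2^-1 : R)%:C)%C.

Fixpoint zs (y : A) (k : nat) : A :=
  if k is k'.+1 then half *: (y + mul (zs y k') (zs y k')) else 0.

Section Sqrt.
Variables (y : A) (r : R).
Hypotheses (sy : star y = y) (ny : nrm y <= r) (r1 : r < 1).
Let rho := (1 + r) / 2.

Lemma r0 : 0 <= r.
Proof. exact: le_trans (nrm_ge0 _) ny. Qed.

Lemma zs_star k : star (zs y k) = zs y k.
Proof.
elim: k => [|k IH] /=; first exact: star0.
by rewrite starR starD starM IH sy.
Qed.

Lemma zs_nrm k : nrm (zs y k) <= rho.
Proof.
have hr := r0.
elim: k => [|k IH] /=; first by rewrite nrm0 /rho; lra.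
rewrite nrmZ ?invr_ge0 ?ler0n //.
have h1 := nrmD y (mul (zs y k) (zs y k)).
have h2 := nrm_mul (zs y k) (zs y k).
have h3 := nrm_ge0 (zs y k).
rewrite /rho in IH *.
have h4 : nrm (zs y k) * nrm (zs y k) <= (1 + r) / 2 * ((1 + r) / 2) by nra.
have h5 : nrm (y + mul (zs y k) (zs y k)) <= r + (1 + r) / 2 * ((1 + r) / 2).
  move: h1 h2 h4 ny; set a := nrm (y + _); set b := nrm (mul _ _); set c := nrm (zs y k) * _; set dd := (1 + r) / 2 * _.
  move=> *. lra.
have h6a : 0 <= r + 3 by lra.
have h6b : 0 <= 1 - r.
  have r1' : r < 1 by exact: r1.
  lra.
have h6 : 0 <= (r + 3) * (1 - r) by exact: mulr_ge0.
have e7 : (1 + r) / 2 * ((1 + r) / 2) = (1 + 2 * r + r * r) / 4 by field.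
have h6' : 0 <= 3 - 2 * r - r * r by nra.
have h7 : r + (1 + r) / 2 * ((1 + r) / 2) <= 1 + r by rewrite e7; lra.
have h8 : 2^-1 = (1 / 2 : R) by rewrite div1r.
rewrite h8; lra.
Qed.

Lemma zs_diff k : nrm (zs y k.+2 - zs y k.+1) <= rho * nrm (zs y k.+1 - zs y k).
Proof.
have e : zs y k.+2 - zs y k.+1 = half *: (mul (zs y k.+1) (zs y k.+1 - zs y k)
   + mul (zs y k.+1 - zs y k) (zs y k)).
  rewrite [zs y k.+2]/= [in LHS]/= -scalerBr; congr (_ *: _).
  rewrite mBr mBl; set p := mul (zs y k.+1) (zs y k.+1).
  set q := mul (zs y k.+1) (zs y k); set u := mul (zs y k) (zs y k).
  rewrite /= -/u.
  by rewrite opprD addrACA subrr add0r addrA subrK.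
rewrite e nrmZ ?invr_ge0 ?ler0n //.
set d := zs y k.+1 - zs y k.
have h1 := nrmD (mul (zs y k.+1) d) (mul d (zs y k)).
have h2 := nrm_mul (zs y k.+1) d.
have h3 := nrm_mul d (zs y k).
have h4 := zs_nrm k.+1; have h5 := zs_nrm k.
have h6 := nrm_ge0 d; have h7 := nrm_ge0 (zs y k); have h8 := nrm_ge0 (zs y k.+1).
have h9 : nrm (zs y k.+1) * nrm d <= rho * nrm d by nra.
have h10 : nrm d * nrm (zs y k) <= nrm d * rho by nra.
nra.
Qed.

Lemma rho_bounds : 0 <= rho /\ rho < 1.
Proof. have := r0; have r1' : r < 1 by exact: r1. rewrite /rho; split; lra. Qed.

Lemma zs_geo k : nrm (zs y k.+1 - zs y k) <= rho ^+ k.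
Proof.
have [rp rl] := rho_bounds.
elim: k => [|k IH].
  by rewrite expr0 /= subr0; have := zs_nrm 1; rewrite /=; lra.
have := zs_diff k; rewrite exprS; have := nrm_ge0 (zs y k.+1 - zs y k). nra.
Qed.

Lemma zs_tail m j : nrm (zs y (m + j) - zs y m) <= (rho ^+ m - rho ^+ (m + j)) / (1 - rho).
Proof.
have [rp rl] := rho_bounds.
have rl' : 0 < 1 - rho by lra.
elim: j => [|j IH].
  by rewrite addn0 !subrr nrm0 GRing.mul0r.
have e : zs y (m + j.+1) - zs y m = (zs y (m + j).+1 - zs y (m + j)) + (zs y (m + j) - zs y m).
  by rewrite addnS addrA subrK.
rewrite e; apply: le_trans (nrmD _ _) _.
have h := zs_geo (m + j).
have e2 : (rho ^+ m - rho ^+ (m + j.+1)) / (1 - rho) =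
   rho ^+ (m + j) + (rho ^+ m - rho ^+ (m + j)) / (1 - rho).
  rewrite addnS exprS; field; lra.
rewrite e2; lra.
Qed.

Lemma zs_cvg : cvgn (zs y).
Proof.
have [rp rl] := rho_bounds.
have rl' : 0 < 1 - rho by lra.
apply/cauchy_cvgP/cauchy_exP => eps; rewrite ltcE /= => /andP [/eqP Ie e0].
have g0 : geometric (1 - rho)^-1 rho @ \oo --> (0 : R).
  by apply: cvg_geometric; rewrite ger0_norm.
move/cvgrPdist_lt: g0 => /(_ _ e0) [N _ HN].
have {HN} HN := HN N (leqnn N); rewrite /= sub0r normrN in HN.
exists (zs y N); exists N => // n /= Nn.
rewrite -ball_normE /= normE -nrmN opprB.
have ee : eps = ((complex.Re eps)%:C)%C.
  exact: realC_of.
rewrite ee ltcR.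
have := zs_tail N (n - N); rewrite subnKC //.
have h1 : 0 <= rho ^+ n by rewrite exprn_ge0.
move=> h2; apply: le_lt_trans h2 _.
rewrite ger0_norm in HN; last by rewrite mulr_ge0 ?invr_ge0 ?exprn_ge0 //; lra.
apply: le_lt_trans HN; rewrite mulrC ler_pM2l ?invr_gt0 //; lra.
Qed.
Let zl := limn (zs y).
Let Hzl : zs y @ \oo --> zl := zs_cvg.

Lemma Dcvg : (fun k => nrm (zl - zs y k)) @ \oo --> (0 : R).
Proof. exact/cvgAP. Qed.

Lemma zl_fix : zl = half *: (y + mul zl zl).
Proof.
have h1 : (fun k => zs y k.+1) @ \oo --> zl by rewrite (cvg_shiftS (zs y)).
apply: uniqA h1 _.
set c := 2^-1 * (nrm zl + rho).
apply: (@cvgA_dom _ _ _ _ _ (fun k => nrm (zl - zs y k) * c)).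
  by rewrite -(GRing.mul0r c); apply: cvgMl; exact: Dcvg.
near=> k; rewrite /= -scalerBr nrmZ ?invr_ge0 ?ler0n //.
have e : y + mul zl zl - (y + mul (zs y k) (zs y k)) =
   mul zl (zl - zs y k) + mul (zl - zs y k) (zs y k).
  rewrite mBr mBl opprD addrACA subrr add0r addrA subrK //.
rewrite e; set d := zl - zs y k.
have h2 := nrmD (mul zl d) (mul d (zs y k)).
have h3 := nrm_mul zl d; have h4 := nrm_mul d (zs y k).
have h5 := zs_nrm k; have h6 := nrm_ge0 d.
have h7 : nrm d * nrm (zs y k) <= nrm d * rho by rewrite ler_wpM2l.
rewrite /c; have h8 : (0 : R) <= 2^-1 by rewrite invr_ge0 ler0n.
have h9 : nrm (mul zl d + mul d (zs y k)) <= nrm d * (nrm zl + rho) by nra.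
have := ler_wpM2l h8 h9; nra.
Unshelve. all: by end_near.
Qed.

Lemma zl_star : star zl = zl.
Proof.
apply: (@uniqA _ _ _ (zs y)) Hzl.
have -> : zs y = fun k => star (zs y k) by apply: funext => k; rewrite zs_star.
apply: (@cvgA_dom _ _ _ _ _ (fun k => nrm (zl - zs y k))); first exact: Dcvg.
by near=> k; rewrite -starB nrm_star.
Unshelve. all: by end_near.
Qed.

Lemma sqrt_main (a : A) : exists d,
  mul (star a) a = mul (star a) (mul y a) + mul (star d) d.
Proof.
exists (a - mul zl a).
have ey : y = zl + zl - mul zl zl.
  have := zl_fix; move/(congr1 (fun v => ((2%:R : R)%:C)%C *: v)).
  rewrite scalerA /half -rmorphM mulfV ?pnatr_eq0 // scale1r => h.
  have h' : zl + zl = y + mul zl zl by rewrite -h rmorph_nat scaler_nat mulr2n.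
  by rewrite h' addrK.
rewrite ey starB starM zl_star.
rewrite !(mBl, mBr, mDl, mDr, mrN, mNr) !mA.
set p := mul (star a) a; set q := mul (mul (star a) zl) a.
set u := mul (mul (mul (star a) zl) zl) a.
by rewrite opprK addrACA [- u + _]addrCA addNr addr0 addrACA subrr addr0 addrC addKr.
Qed.
End Sqrt.

Lemma scale_le_real (x z : R) : 0 <= x -> 0 <= z ->
  (forall t : R, 0 < t < 1 -> t * x <= z) -> x <= z.
Proof.
move=> x0 z0 H; rewrite leNgt; apply/negP => zx.
have xp : 0 < x by apply: le_lt_trans zx.
have := H ((z + x) / (2 * x)).
have e : (z + x) / (2 * x) * x = (z + x) / 2 by field; lra.
rewrite e.
have t0 : 0 < (z + x) / (2 * x) by apply: divr_gt0; lra.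
have t1 : (z + x) / (2 * x) < 1 by rewrite ltr_pdivrMr; lra.
rewrite t0 t1 /= => /(_ isT); lra.
Qed.

Lemma scale_le_ereal (x z : \bar R) : (0 <= x)%E ->
  (forall t : R, 0 < t < 1 -> (t%:E * x <= z)%E) -> (x <= z)%E.
Proof.
move=> x0 H.
have ht : 0 < (1/2 : R) < 1.
  by apply/andP; split; lra.
have h := H _ ht.
have h0 : (0 <= (1/2)%:E * x)%E by rewrite mule_ge0 // lee_fin; lra.
case: z H h => [z| |] H h; last 2 first.
- by rewrite leey.
- by have := le_trans h0 h.
case: x x0 H h h0 => [x| |] //= x0 H h h0.
- rewrite lee_fin; apply: scale_le_real => //.
  by rewrite -lee_fin; apply: le_trans h0 h.
- have h2 : (0 : R) < 1/2 by lra.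
  by rewrite gt0_muley in h; rewrite // lte_fin.
Qed.
End CS.

Section Main.
Variables (R : realType) (A : completeNormedModType R[i])
    (mul : A -> A -> A) (star : A -> A) (alpha : R -> A -> A) (beta : R)
    (E : nat -> A) (omega : A -> \bar R).
Hypotheses (HC : Cstar_algebra mul star)
  (HE : approx_identity mul star E)
  (Hw : weight mul star omega)
  (Hlsc : weight_lsc mul star omega).

Local Notation pos := (pos_cone mul star).

Lemma pos_sa x : pos x -> star x = x.
Proof. by case=> a ->; rewrite (starM HC) (starK HC). Qed.

Lemma E_sa n : star (E n) = E n.
Proof. by case: HE => h _ _; apply: pos_sa. Qed.

Lemma nrmE1 n : nrm (E n) <= 1.
Proof. by case: HE => _ /(_ n); rewrite normE (_ : 1 = 1%:C)%C // lecR. Qed.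

Lemma pos_conj x c : pos x -> pos (mul (star c) (mul x c)).
Proof.
case=> a ->; exists (mul a c).
by rewrite (starM HC) !(mA HC).
Qed.

Lemma pos_sc (t : R) x : 0 <= t -> pos x -> pos ((t%:C)%C *: x).
Proof.
move=> t0 [a ->]; exists ((Num.sqrt t)%:C%C *: a).
rewrite (starR HC) (mZl HC) (mZr HC) scalerA -rmorphM -expr2 sqr_sqrtr //.
Qed.

Lemma pos_EE k : pos (mul (E k) (E k)).
Proof. by exists (E k); rewrite E_sa. Qed.

Lemma om_ge0 x : pos x -> (0 <= omega x)%E.
Proof. by case: Hw => h _ _; apply: h. Qed.

Lemma om_add x y : pos x -> pos y -> omega (x + y) = (omega x + omega y)%E.
Proof. by case: Hw => _ h _; apply: h. Qed.

Lemma om_scale (t : R) x : 0 <= t -> pos x -> omega ((t%:C)%C *: x) = (t%:E * omega x)%E.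
Proof. by case: Hw => _ _ h; apply: h. Qed.

Lemma om_le_sqrt y (r : R) c : pos y -> nrm y <= r -> r < 1 ->
  (omega (mul (star c) (mul y c)) <= omega (mul (star c) c))%E.
Proof.
move=> py ny r1.
have [d ->] := sqrt_main HC (pos_sa py) ny r1 c.
have pd : pos (mul (star d) d) by exists d.
rewrite om_add //; last exact: pos_conj.
by apply: leeDl; apply: om_ge0.
Qed.

Lemma om_mono_E c k :
  (omega (mul (star c) (mul (mul (E k) (E k)) c)) <= omega (mul (star c) c))%E.
Proof.
apply: scale_le_ereal; first exact/om_ge0/pos_conj/pos_EE.
move=> t /andP [t0 t1].
rewrite -om_scale; last exact/pos_conj/pos_EE.
  rewrite -(mZr HC) -(mZl HC).
  apply: (@om_le_sqrt _ t) => //; first exact/pos_sc/pos_EE/ltW.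
  rewrite nrmZ; last exact: ltW.
  have h1 := nrm_mul HC (E k) (E k); have h2 := nrmE1 k; have h3 := nrm_ge0 (E k).
  have h4 : nrm (mul (E k) (E k)) <= 1 by nra.
  by rewrite ler_piMr // ltW.
exact: ltW.
Qed.

Lemma mulL_cvg x (u : nat -> A) (l : A) : u @ \oo --> l ->
  (fun k => mul x (u k)) @ \oo --> mul x l.
Proof.
move=> /cvgAP hu.
apply: (@cvgA_dom _ _ _ _ _ _ _ (fun k => nrm (l - u k) * nrm x)).
  by rewrite -(GRing.mul0r (nrm x)); apply: cvgMl.
near=> k => /=; rewrite -(mBr HC) mulrC; exact: (nrm_mul HC).
Unshelve. all: by end_near.
Qed.

Lemma EEc_cvg c : (fun k => mul (E k) (mul (E k) c)) @ \oo --> c.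
Proof.
case: HE => _ _ /(_ c) [/cvgAP h _].
apply: (@cvgA_dom _ _ _ _ _ _ _ (fun k => nrm (c - mul (E k) c) * 2)).
  by rewrite -(GRing.mul0r 2); apply: cvgMl.
near=> k.
have e : c - mul (E k) (mul (E k) c) = (c - mul (E k) c) + mul (E k) (c - mul (E k) c).
  by rewrite (mBr HC) addrA subrK.
rewrite e; apply: le_trans (nrmD _ _) _.
have := nrm_mul HC (E k) (c - mul (E k) c); have := nrmE1 k.
have := nrm_ge0 (c - mul (E k) c); nra.
Unshelve. all: by end_near.
Qed.

Lemma ExE_cvg x : (fun k => mul (mul (E k) x) (E k)) @ \oo --> x.
Proof.
case: HE => _ _ /(_ x) [/cvgAP h1 /cvgAP h2].
apply: (@cvgA_dom _ _ _ _ _ _ _ (fun k => nrm (x - mul (E k) x) + nrm (x - mul x (E k)))).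
  by rewrite -(addr0 0); apply: cvgD.
near=> k.
have e : x - mul (mul (E k) x) (E k) = (x - mul (E k) x) + mul (E k) (x - mul x (E k)).
  by rewrite (mBr HC) (mA HC) addrA subrK.
rewrite e; apply: le_trans (nrmD _ _) _.
have := nrm_mul HC (E k) (x - mul x (E k)); have := nrmE1 k.
have := nrm_ge0 (x - mul x (E k)); nra.
Unshelve. all: by end_near.
Qed.

Lemma lsc_le (u : nat -> A) x (L : \bar R) : (forall k, pos (u k)) ->
  u @ \oo --> x -> (\forall k \near \oo, (omega (u k) <= L)%E) -> (omega x <= L)%E.
Proof.
move=> pu hu; case: L => [l| |] H.
- have hc : closed [set y | pos y /\ (omega y <= l%:E)%E] by exact: Hlsc.
  have := closed_cvg _ hc _ x hu.
  by case; [apply: filterS H => k hk; split|].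
- by rewrite leey.
- case: H => N _ HN; have := HN N (leqnn N).
  by have := om_ge0 (pu N) => h1 h2; have := le_trans h1 h2.
Qed.

Lemma cvg_ev_le (v : nat -> \bar R) (l : R) (d : R) : 0 < d ->
  v @ \oo --> l%:E -> \forall k \near \oo, (v k <= (l + d)%:E)%E.
Proof.
move=> d0 hv.
have : \forall k \near \oo, (v k < (l + d)%:E)%E.
  have hn : nbhs (l%:E) [set y | (y < (l + d)%:E)%E].
    apply: open_nbhs_nbhs; split; first exact: open_ereal_lt_ereal.
    by rewrite /= lte_fin; lra.
  exact: hv _ hn.
by apply: filterS => k /ltW.
Qed.

Lemma key_ineq (g : nat -> A) (P : A) (h : nat -> nat -> A) (g' : nat -> A) (Q : A) :
  pos Q -> (forall k j, pos (h k j)) ->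
  (fun k => omega (g k)) @ \oo --> omega P ->
  (fun k => omega (g' k)) @ \oo --> omega Q ->
  (forall k, (fun j => h k j) @ \oo --> g k) ->
  (forall k j, (omega (h k j) <= omega (g' j))%E) ->
  (omega P <= omega Q)%E.
Proof.
move=> pQ ph hP hQ hh hle.
case EQ : (omega Q) => [l| |]; last 2 first.
- by rewrite leey.
- by have := om_ge0 pQ; rewrite EQ.
have gle : forall k, (omega (g k) <= l%:E)%E.
  move=> k; apply/lee_addgt0Pr => d d0.
  apply: (lsc_le (ph k) (hh k)).
  rewrite EQ in hQ; apply: filterS (cvg_ev_le d0 hQ) => j hj.
  by apply: le_trans (hle k j) hj.
apply: (closed_cvg _ (@closed_ereal_ge_ereal _ (l%:E)) _ _ hP).
by apply: nearW.
Qed.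

Lemma fin_of_scale (t : R) (z : \bar R) : 0 < t -> (0 <= z)%E ->
  (t%:E * z < +oo)%E -> (z < +oo)%E.
Proof.
move=> t0; case: z => [z| |] // _ h.
  exact: ltry.
by rewrite gt0_muley ?lte_fin // in h.
Qed.

Lemma dense (Hfin : forall n, (omega (mul (E n) (E n)) < +oo)%E) :
  densely_defined mul star omega.
Proof.
move=> x px.
have hcl := @closed_closure _ [set x | pos x /\ (omega x < +oo)%E].
apply: (closed_cvg _ hcl _ x (ExE_cvg (x:=x))).
apply: nearW => n; apply: subset_closure.
have pw : pos (mul (mul (E n) x) (E n)).
  by have := pos_conj (E n) px; rewrite E_sa (mA HC).
split => //.
set K := nrm x + 1.
have K0 : 0 < K by rewrite /K; have := nrm_ge0 x; lra.
have Ki0 : 0 <= K^-1 by rewrite invr_ge0 ltW.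
have py : pos ((K^-1%:C)%C *: x) by exact: pos_sc.
have ny : nrm ((K^-1%:C)%C *: x) <= nrm x / K by rewrite nrmZ // mulrC.
have r1 : nrm x / K < 1 by rewrite ltr_pdivrMr // /K; lra.
have := om_le_sqrt (E n) py ny r1.
rewrite E_sa (mZl HC) (mZr HC) (mA HC) om_scale // => h.
apply: (@fin_of_scale (K^-1)); first by rewrite invr_gt0.
  exact: om_ge0.
exact: le_lt_trans h (Hfin n).
Qed.

Lemma sandwich_cont p q : continuous (fun v => mul (mul p v) q).
Proof.
move=> x.
have hid : (fun v : A => nrm (x - v)) @ nbhs x --> (0 : R) by apply/cvgAP; exact: cvg_id.
apply: (@cvgA_dom _ _ _ _ _ _ _ (fun v => nrm (x - v) * (nrm p * nrm q))).
  by rewrite -(GRing.mul0r (nrm p * nrm q)); apply: cvgMl.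
near=> v => /=.
rewrite -(mBl HC) -(mBr HC).
have h1 := nrm_mul HC (mul p (x - v)) q; have h2 := nrm_mul HC p (x - v).
have := nrm_ge0 q; have := nrm_ge0 p; have := nrm_ge0 (x - v); nra.
Unshelve. all: by end_near.
Qed.

Lemma ext_sandwich (Hag : one_param_group mul star alpha)
  (HaE : forall t n, alpha t (E n) = E n) z a b m n :
  alpha_ext alpha z a b ->
  alpha_ext alpha z (mul (mul (E m) a) (E n)) (mul (mul (E m) b) (E n)).
Proof.
case=> f [fc fd fr fz].
set phi := fun v => mul (mul (E m) v) (E n).
have phic : continuous phi := sandwich_cont (p:=E m) (q:=E n).
exists (phi \o f); split.
- move=> w; exact: (cvg_comp _ _ (fc w) (phic (f w))).
- move=> w /fd [L hL]; exists (phi L).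
  have h := cvg_comp _ _ hL (phic L).
  suff -> : (fun h : R[i] => h^-1 *: ((phi \o f) (w + h) - (phi \o f) w)) =
     phi \o (fun h => h^-1 *: (f (w + h) - f w)) by exact: h.
  by apply: funext => u; rewrite /phi /= (mZr HC) (mZl HC) (mBr HC) (mBl HC).
- move=> t; rewrite /= fr /phi.
  case: Hag => /(_ t) [_ _ _ hm _] _ _ _.
  by rewrite !hm !HaE.
- by rewrite /= fz.
Qed.
End Main.

Unset Implicit Arguments.
Set Strict Implicit.

Theorem lemma4p3 (R : realType) (A : completeNormedModType R[i])
    (mul : A -> A -> A) (star : A -> A) (alpha : R -> A -> A) (beta : R)
    (E : nat -> A) (omega : A -> \bar R) :
  Cstar_algebra mul star ->
  separable A ->
  one_param_group mul star alpha ->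
  approx_identity mul star E ->
  (forall t n, alpha t (E n) = E n) ->
  (forall n m, (n < m)%N -> mul (E n) (E m) = E n) ->
  weight mul star omega ->
  weight_lsc mul star omega ->
  (forall t x, pos_cone mul star x -> omega (alpha t x) = omega x) ->
  (forall n, (omega (mul (E n) (E n)) < +oo)%E) ->
  (forall x, pos_cone mul star x ->
     (fun n => omega (mul (mul (E n) x) (E n))) @ \oo --> omega x) ->
  (KMS_weight mul star alpha beta omega <->
   (forall a b, alpha_ext alpha (- (beta / 2) *i)%C a b ->
      forall n m : nat,
        omega (mul (mul (mul (E n) (star a)) (mul (E m) (E m))) (mul a (E n))) =
        omega (mul (mul (mul (E m) b) (mul (E n) (E n))) (mul (star b) (E m))))).
Proof.
move=> HC _ Hag HE HaE _ Hw Hlsc Hinv Hfin Hlim.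
have EE := E_sa HC HE.
split.
- case=> _ _ Hkms a b hab n m.
  have := Hkms _ _ (ext_sandwich HC Hag HaE m n hab).
  move=> h; rewrite !(starM HC) !EE ?(starK HC) !(mA HC) in h *.
  exact: h.
- move=> Hcond; split => //.
  + split => //; exact: dense HC HE Hw Hfin.
  + move=> a b hab.
    have pa : pos_cone mul star (mul (star a) a) by exists a.
    have pb : pos_cone mul star (mul b (star b)) by exists (star b); rewrite (starK HC).
    pose c n := mul a (E n).
    pose c' m := mul (star b) (E m).
    have eqL : forall n m, mul (mul (mul (E n) (star a)) (mul (E m) (E m))) (mul a (E n)) =
        mul (star (c n)) (mul (mul (E m) (E m)) (c n)).
      by move=> n m; rewrite /c !(starM HC) !EE !(mA HC).
    have eqR : forall n m, mul (mul (mul (E m) b) (mul (E n) (E n))) (mul (star b) (E m)) =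
        mul (star (c' m)) (mul (mul (E n) (E n)) (c' m)).
      by move=> n m; rewrite /c' !(starM HC) !EE !(starK HC) !(mA HC).
    have eqga : forall n, mul (mul (E n) (mul (star a) a)) (E n) = mul (star (c n)) (c n).
      by move=> n; rewrite /c !(starM HC) !EE !(mA HC).
    have eqgb : forall m, mul (mul (E m) (mul b (star b))) (E m) = mul (star (c' m)) (c' m).
      by move=> m; rewrite /c' !(starM HC) !EE !(starK HC) !(mA HC).
    apply/le_anti/andP; split.
    * apply: (key_ineq Hw Hlsc
        (g := fun n => mul (mul (E n) (mul (star a) a)) (E n))
        (h := fun n m => mul (mul (mul (E n) (star a)) (mul (E m) (E m))) (mul a (E n)))
        (g' := fun m => mul (mul (E m) (mul b (star b))) (E m))) => //.
      - by move=> n m; rewrite eqL; apply: pos_conj => //; exact: pos_EE.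
      - exact: Hlim.
      - exact: Hlim.
      - move=> n; rewrite eqga.
        have := mulL_cvg HC (x := star (c n)) (EEc_cvg HC HE (c := c n)).
        suff -> : (fun m => mul (mul (mul (E n) (star a)) (mul (E m) (E m))) (mul a (E n))) =
          (fun m => mul (star (c n)) (mul (E m) (mul (E m) (c n)))) by [].
        by apply: funext => m; rewrite eqL !(mA HC).
      - move=> n m; rewrite (Hcond a b hab) eqR eqgb.
        exact: (om_mono_E HC HE Hw).
    * apply: (key_ineq Hw Hlsc
        (g := fun m => mul (mul (E m) (mul b (star b))) (E m))
        (h := fun m n => mul (mul (mul (E m) b) (mul (E n) (E n))) (mul (star b) (E m)))
        (g' := fun n => mul (mul (E n) (mul (star a) a)) (E n))) => //.
      - by move=> m n; rewrite eqR; apply: pos_conj => //; exact: pos_EE.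
      - exact: Hlim.
      - exact: Hlim.
      - move=> m; rewrite eqgb.
        have := mulL_cvg HC (x := star (c' m)) (EEc_cvg HC HE (c := c' m)).
        suff -> : (fun n => mul (mul (mul (E m) b) (mul (E n) (E n))) (mul (star b) (E m))) =
          (fun n => mul (star (c' m)) (mul (E n) (mul (E n) (c' m)))) by [].
        by apply: funext => n; rewrite eqR !(mA HC).
      - move=> m n; rewrite -(Hcond a b hab) eqL eqga.
        exact: (om_mono_E HC HE Hw).
Qed.
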